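(* Let $t\geqslant 1$ and $k$ be integers with $1\leqslant k\leqslant \frac{2t+1}{3}$. Then $$\sum_{j=0}^{k-1}\binom{2t+1-3k}{t-1-3j}\binom{2k}{1+2j}\leqslant 2\binom{2t-2}{t-1}.$$
   Context: Binomial convention: $\binom{0}{0}=1$ and $\binom{p}{q}=0$ whenever $q<0$, $p<0$ or $p<q$. *)

(* Defs.v *)
From Stdlib Require Import ZArith.
From mathcomp Require Import all_boot.

Definition binZ (p q : Z) : nat :=
  if ((q <? 0) || (p <? 0) || (p <? q))%Z then 0%N
  else 'C(Z.to_nat p, Z.to_nat q).

(* Main.v *)
Require Import Defs.

From Stdlib Require Import ZArith.
From mathcomp Require Import all_boot.
From Stdlib Require Import Lia.
From mathcomp Require Import zify.

Definition c n := 'C(n, n %/ 2).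

Lemma vdm_ge k l i j : j <= i -> 'C(k, j) * 'C(l, i - j) <= 'C(k + l, i).
Proof.
move=> hji; rewrite -Vandermonde.
have hj : j < i.+1 by lia.
rewrite (bigD1 (Ordinal hj)) //=; exact: leq_addr.
Qed.

Lemma bin_step n q : q.*2.+2 <= n -> 'C(n, q) <= 'C(n, q.+1).
Proof.
move=> h; have := mul_bin_left n q.
have hq : q.+1 <= n - q by lia.
move=> e; rewrite -(@leq_pmul2l q.+1) // e; exact: leq_mul.
Qed.

Lemma bin_mono n m : forall q, q + m = n %/ 2 -> 'C(n, q) <= 'C(n, n %/ 2).
Proof.
elim: m => [|m IH] q h.
  have -> : n %/ 2 = q by lia. by [].
apply: leq_trans (bin_step _ _ _) (IH q.+1 _); lia.
Qed.

Lemma bin_le_c n q : 'C(n, q) <= c n.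
Proof.
rewrite /c.
case: (leqP q (n %/ 2)) => h.
  apply: (bin_mono n (n %/ 2 - q)); lia.
case: (leqP q n) => h2; last by rewrite bin_small.
rewrite -bin_sub //; apply: (bin_mono n (n %/ 2 - (n - q))); lia.
Qed.

Lemma pair_sum (f : nat -> nat) N :
  \sum_(0 <= j < N) (f j.*2 + f j.*2.+1) = \sum_(0 <= i < N.*2) f i.
Proof.
elim: N => [|N IH]; first by rewrite !big_geq.
rewrite big_nat_recr //= IH doubleS !big_nat_recr //= ?addnA //.
Qed.

Lemma sum_bin m : \sum_(0 <= i < m.+1) 'C(m, i) = 2 ^ m.
Proof.
have := expnDn 1 1 m; rewrite addn1 => ->.
rewrite big_mkord; apply: eq_bigr => i _; by rewrite !exp1n !muln1.
Qed.

Lemma odd_sum K : \sum_(0 <= j < K.+1) 'C(K.*2.+2, j.*2.+1) = 2 ^ K.*2.+1.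
Proof.
rewrite -sum_bin.
have -> : (K.*2.+1).+1 = (K.+1).*2 by lia.
rewrite -pair_sum; apply: eq_bigr => j _; rewrite binS addnC //.
Qed.

Lemma c_big K : K != 1 -> 4 ^ K <= c (3 * K).
Proof.
suff H : forall K, 2 <= K -> 4 ^ K <= c (3 * K) /\ 4 ^ K.+1 <= c (3 * K.+1).
  case: K => [|[|K]] hK //.
  by case: (H K.+2 isT).
elim=> [|K0 IH] //.
case: (leqP 2 K0) => hK.
  case: (IH hK) => h0 h1 _; split => //.
  have e : 3 * K0.+2 = 3 * K0 + 6 by lia.
  rewrite /c e.
  have e2 : (3 * K0 + 6) %/ 2 = (3*K0) %/ 2 + 3 by lia.
  have := vdm_ge (3 * K0) 6 ((3 * K0 + 6) %/ 2) ((3*K0) %/ 2) ltac:(lia).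
  rewrite e2 addKn => h2.
  apply: leq_trans h2.
  rewrite (_ : 'C(6,3) = 20) // -/(c (3*K0)) !expnS.
  move: h0; lia.
case: K0 hK IH => [|[|K0]] // _ _ _.
Qed.

Lemma k1 s : 4 * c (2*s+1) <= 'C(2*s+4, s+2).
Proof.
rewrite /c (_ : (2*s+1) %/ 2 = s); last by lia.
have -> : 2*s+4 = (2*s+3).+1 by lia.
have -> : s + 2 = (s+1).+1 by lia.
rewrite binS.
have h1 := vdm_ge (2*s+1) 2 (s+1) s ltac:(lia).
have h2 := vdm_ge (2*s+1) 2 (s+2) (s+1) ltac:(lia).
have e1 : s+1-s = 1 by lia. rewrite e1 in h1.
have e2 : s+2-(s+1) = 1 by lia. rewrite e2 in h2.
have e3 : 2*s+1+2 = 2*s+3 by lia. rewrite e3 in h1 h2.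
have e4 : s+2 = (s+1).+1 by lia. rewrite e4 in h2.
have e : 'C(2*s+1, s+1) = 'C(2*s+1, s).
  rewrite -bin_sub; last by lia.
  have e5 : 2*s+1-(s+1) = s by lia. by rewrite e5.
rewrite e bin1 in h2; rewrite bin1 in h1; lia.
Qed.

Lemma binZ_le p q : binZ p q <= 'C(Z.to_nat p, Z.to_nat q).
Proof. by rewrite /binZ; case: ifP. Qed.

Lemma binZ_eq p q : (0 <= q)%Z -> (q <= p)%Z -> binZ p q = 'C(Z.to_nat p, Z.to_nat q).
Proof.
move=> h1 h2; rewrite /binZ.
case: (Z.ltb_spec q 0); try lia; case: (Z.ltb_spec p 0); try lia;
case: (Z.ltb_spec p q); try lia; done.
Qed.

Theorem lemma5 (t k : Z) :
  (1 <= t)%Z -> (1 <= k)%Z -> (3 * k <= 2 * t + 1)%Z ->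
  (\sum_(0 <= j < Z.to_nat k)
      binZ (2 * t + 1 - 3 * k) (t - 1 - 3 * Z.of_nat j) *
      binZ (2 * k) (1 + 2 * Z.of_nat j)
   <= 2 * binZ (2 * t - 2) (t - 1))%N.
Proof.
move=> ht hk htk.
set T := Z.to_nat (t - 1). set K := Z.to_nat (k - 1).
have eK : Z.to_nat k = K.+1 by rewrite /K; lia.
have eR : binZ (2 * t - 2) (t - 1) = 'C(T.*2, T).
  rewrite binZ_eq; try lia. congr 'C(_, _); rewrite /T; lia.
rewrite eK eR.
have en : Z.to_nat (2 * t + 1 - 3 * k) = (2 * T - 3 * K)%N by rewrite /T /K; lia.
have hb : (3 * K <= 2 * T)%N by rewrite /T /K; lia.
apply: (@leq_trans (\sum_(0 <= j < K.+1) c (2 * T - 3 * K) * 'C(K.*2.+2, j.*2.+1))).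
  apply: leq_sum => j _; apply: leq_mul.
    apply: leq_trans (binZ_le _ _) _; rewrite en; exact: bin_le_c.
  apply: leq_trans (binZ_le _ _) _.
  rewrite (_ : Z.to_nat (2 * k) = K.*2.+2); last by rewrite /K; lia.
  rewrite (_ : Z.to_nat (1 + 2 * Z.of_nat j) = j.*2.+1); last by lia.
  by [].
rewrite -big_distrr /= odd_sum.
have [eK1|hK1] := eqVneq K 1.
  rewrite eK1 in hb *.
  have [s es] : exists s, T = s + 2 by exists (T - 2); lia.
  have := k1 s.
  rewrite (_ : 2 * T - 3 * 1 = 2 * s + 1); last by lia.
  rewrite (_ : T.*2 = 2 * s + 4); last by lia.
  rewrite es; lia.
have h4 := c_big K hK1.
have hv := vdm_ge (2 * T - 3 * K) (3 * K) T ((2 * T - 3 * K) %/ 2) ltac:(lia).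
have ec : 'C(3 * K, T - (2 * T - 3 * K) %/ 2) = c (3 * K).
  rewrite /c; case: (boolP (odd K)) => oK.
    rewrite -bin_sub; last by lia.
    congr 'C(_, _). 
    have : odd (3 * K) by rewrite oddM oK.
    move=> h3; lia.
  have : ~~ odd (3 * K) by rewrite oddM negb_and oK orbT.
  move=> h3; congr 'C(_, _); lia.
rewrite ec -/(c _) (_ : 2 * T - 3 * K + 3 * K = T.*2) in hv; last by lia.
apply: leq_trans _ (leq_mul (leqnn 2) hv).
rewrite expnS (mulnC (c _)) -mulnA leq_pmul2l // mulnC.
rewrite -mul2n expnM; exact: leq_mul.
Qed.
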